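(* Let $G$ be a flag with vertices $v_1,\dots,v_n$ ordered by increasing $x$-coordinate. Let $V^+=\{v_i: v_i \text{ is above } v_1v_2\}$ and $V^-=\{v_i: v_i \text{ is below } v_1v_2\}$. Then for $v_{i_1},v_{i_2}\in V^+$ with $i_1<i_2$ we have $v_1v_{i_1}\prec v_1v_{i_2}$, and for $v_{i_1},v_{i_2}\in V^-$ with $i_1<i_2$ we have $v_1v_{i_2}\prec v_1v_{i_1}$.
   Context: Let $\mathcal C=S^1\times\mathbb R$ ($S^1=[0,1]$ with $0\sim1$), points $p=(p_x,p_y)$ with $0\le p_x<1$. A flag is a graph drawn on $\mathcal C$ (vertices distinct points, edges Jordan arcs, no overlapping edges, no edge through a vertex) that is complete, simple (any two edges meet in at most one point: a common endpoint or a proper crossing), monotone (every edge meets each vertical line $l_{x=a}=\{p:p_x=a\}$ at most once, no two vertices share an $x$-coordinate, no vertex has $x$-coordinate $0$), and such that $l_{x=0}$ meets every edge in its relative interior. A point $v$ is related to an $x$-monotone curve $e$ if $l_{x=v_x}$ meets $e$ in its relative interior; then $v$ is below (above) $e$ if $v_y$ is smaller (larger) than the $y$-coordinate of $l_{x=v_x}\cap e$. Two $x$-monotone curves $e,f$ are related if they do not cross, some vertical line meets both relative interiors, and all such lines meet them in the same vertical order; then $e\prec f$ means that on every vertical line meeting both relative interiors, $e$'s point has $y$-coordinate at most that of $f$'s point. *)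

(* Defs.v *)
From HB Require Import structures.
From mathcomp Require Import all_boot all_order all_algebra.
From mathcomp Require Import all_classical all_reals all_analysis.
Set Implicit Arguments. Unset Strict Implicit. Unset Printing Implicit Defensive.
Import Order.TTheory GRing.Theory Num.Theory numFieldNormedType.Exports.
Local Open Scope ring_scope.
Local Open Scope classical_set_scope.

Section Cylinder.
Context {R : realType}.

(* A point p = (p_x, p_y) of C = S^1 x R, with 0 <= p_x < 1. *)
Definition pt := (R * R)%type.

(* fractional part: the covering map R -> S^1 = [0,1) *)
Definition frac (x : R) : R := x - (Num.floor x)%:~R.

(* A curve on C, given by a lift [0,1] -> R x R of a map [0,1] -> C
   (every continuous map [0,1] -> C has such a continuous lift). *)
Record carc := Carc { ax : R -> R ; ay : R -> R }.

Definition arc_at (c : carc) (t : R) : pt := (frac (ax c t), ay c t).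

Definition pts (c : carc) : set pt := [set p | exists t, 0 <= t <= 1 /\ arc_at c t = p].
Definition relint (c : carc) : set pt := [set p | exists t, 0 < t < 1 /\ arc_at c t = p].
Definition endpts (c : carc) : set pt := [set arc_at c 0; arc_at c 1].

Definition jordan_arc (c : carc) : Prop :=
  {within (`[0, 1]%classic : set R), continuous (ax c)} /\ {within (`[0, 1]%classic : set R), continuous (ay c)} /\
  (forall s t, 0 <= s <= 1 -> 0 <= t <= 1 -> arc_at c s = arc_at c t -> s = t).

Definition xmonotone (c : carc) : Prop :=
  forall p q, pts c p -> pts c q -> p.1 = q.1 -> p = q.

Definition below (v : pt) (e : carc) : Prop :=
  exists y, relint e (v.1, y) /\ v.2 < y.
Definition above (v : pt) (e : carc) : Prop :=
  exists y, relint e (v.1, y) /\ y < v.2.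

Definition side_order (e f : carc) (a : R) (lt_ef : bool) : Prop :=
  forall y z, relint e (a, y) -> relint f (a, z) -> if lt_ef then y < z else z < y.
Definition proper_crossing (e f : carc) (p : pt) : Prop :=
  relint e p /\ relint f p /\
  exists eps : R, 0 < eps /\ exists b : bool,
    (forall s, 0 < s < eps -> side_order e f (frac (p.1 - s)) b) /\
    (forall s, 0 < s < eps -> side_order e f (frac (p.1 + s)) (~~ b)).

Definition cross (e f : carc) : Prop := exists p, proper_crossing e f p.

Definition weakly_below (e f : carc) : Prop :=
  forall a y z, relint e (a, y) -> relint f (a, z) -> y <= z.

Definition related (e f : carc) : Prop :=
  ~ cross e f /\
  (exists a y z, relint e (a, y) /\ relint f (a, z)) /\
  (weakly_below e f \/ weakly_below f e).

Definition prec (e f : carc) : Prop := related e f /\ weakly_below e f.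

(* A flag with vertices v 0, ..., v (n-1) (indexed by increasing x-coordinate)
   and, for i < j < n, the edge E i j joining v i and v j. *)
Definition flag (n : nat) (v : nat -> pt) (E : nat -> nat -> carc) : Prop :=
  (forall i, (i < n)%N -> 0 < (v i).1 < 1) /\
  (forall i j, (i < j < n)%N -> (v i).1 < (v j).1) /\
  (forall i j, (i < j < n)%N ->
     jordan_arc (E i j) /\ endpts (E i j) = [set v i; v j]) /\
  (forall i j k, (i < j < n)%N -> (k < n)%N -> ~ relint (E i j) (v k)) /\
  (forall i j k l, (i < j < n)%N -> (k < l < n)%N -> (i, j) <> (k, l) ->
     (forall p q, pts (E i j) p -> pts (E k l) p ->
                  pts (E i j) q -> pts (E k l) q -> p = q) /\
     (forall p, pts (E i j) p -> pts (E k l) p ->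
        (endpts (E i j) p /\ endpts (E k l) p) \/ proper_crossing (E i j) (E k l) p)) /\
  (forall i j, (i < j < n)%N -> xmonotone (E i j)) /\
  (forall i j, (i < j < n)%N -> exists y, relint (E i j) (0, y)).

End Cylinder.

(* Main.v *)
Require Import Defs.
From HB Require Import structures.
From mathcomp Require Import all_boot all_order all_algebra.
From mathcomp Require Import all_classical all_reals all_analysis.
From mathcomp Require Import lra zify.
Set Implicit Arguments. Unset Strict Implicit. Unset Printing Implicit Defensive.
Import Order.TTheory GRing.Theory Num.Theory numFieldNormedType.Exports.
Local Open Scope ring_scope.
Local Open Scope classical_set_scope.

Local Notation frac := Defs.frac.
Section S.
Context {R : realType}.

Definition clamp (a b u : R) := Num.min (Num.max u a) b.

Lemma clamp_in a b u : a <= b -> `[a, b] (clamp a b u).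
Proof.
move=> ab; rewrite /= in_itv /= /clamp.
rewrite le_min ge_min ab lexx le_max lexx !orbT.
by [].
Qed.

Lemma clamp_id a b u : a <= u <= b -> clamp a b u = u.
Proof. by case/andP=> au ub; rewrite /clamp max_l // min_l. Qed.

Lemma clamp_cont a b : continuous (clamp a b).
Proof.
move=> u; apply: (@continuous_min _ _ (fun u => Num.max u a) (fun _ => b)).
  apply: (@continuous_max _ _ id (fun _ => a)) => //; exact: cvg_cst.
exact: cvg_cst.
Qed.

Lemma within_clamp (f : R -> R) a b : a <= b ->
  {within `[a, b], continuous f} -> continuous (fun u => f (clamp a b u)).
Proof.
move=> ab /subspace_continuousP fc u.
have cA := clamp_in _ ab.
have H1 := fc _ (cA u).
apply: (cvg_comp (clamp a b) f _ H1).
move=> P /= hP.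
have H2 : nbhs u (fun x => `[a,b] (clamp a b x) -> P (clamp a b x)) := @clamp_cont a b u _ hP.
apply: (filterS _ H2) => y H; exact: H (cA y).
Qed.


Lemma ivt0 (f : R -> R) a b : a <= b -> continuous f -> f a <= 0 -> 0 <= f b ->
  exists2 c, a <= c <= b & f c = 0.
Proof.
move=> ab fc fa fb.
have fw : {within `[a, b], continuous f} by apply: continuous_subspaceT.
have H : Num.min (f a) (f b) <= 0 <= Num.max (f a) (f b).
  by rewrite ge_min le_max fa fb orbT.
have [c cab fc0] := IVT ab fw H.
by exists c => //; move: cab; rewrite in_itv.
Qed.

Lemma keep_sign (f g : R -> R) a b : a <= b -> continuous f -> continuous g ->
  (forall u, a <= u <= b -> f u != g u) -> f a < g a -> f b < g b.
Proof.
move=> ab fc gc N fga; rewrite ltNge; apply/negP => gfb.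
have c1 : continuous (fun u => f u - g u) by move=> x; exact: (@continuousB _ _ _ f g x (fc x) (gc x)).
have c2 : f a - g a <= 0 by rewrite subr_le0 ltW.
have c3 : 0 <= f b - g b by rewrite subr_ge0.
have [c cab] := ivt0 ab c1 c2 c3.
by move=> /eqP; rewrite subr_eq0 (negbTE (N c cab)).
Qed.


Lemma ivt0s (f : R -> R) a b : a <= b -> continuous f -> f a < 0 -> 0 < f b ->
  exists c, a < c < b /\ f c = 0.
Proof.
move=> ab fc fa fb; have [c /andP[ac cb] f0] := ivt0 ab fc (ltW fa) (ltW fb).
exists c; split=> //; apply/andP; split.
  by rewrite lt_neqAle ac andbT; apply/eqP => e; move: fa; rewrite e f0 ltxx.
by rewrite lt_neqAle cb andbT; apply/eqP => e; move: fb; rewrite -e f0 ltxx.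
Qed.

Lemma cont_shift (h : R -> R) c : continuous h -> continuous (fun u => h (u + c)).
Proof.
move=> hc x; apply: (@continuous_comp _ _ _ (fun u => u + c) h).
  by apply: (@continuousD _ _ _ id (fun _ => c)); [exact: cvg_id|exact: cvg_cst].
exact: hc.
Qed.

Lemma core (h01 h0a h0b hab h1b : R -> R) (x0 x1 xa xb y0 y1 ya yb : R) :
 0 < x0 -> x0 < x1 -> x1 < xa -> xa < xb -> xb < 1 ->
 continuous h01 -> continuous h0a -> continuous h0b -> continuous hab -> continuous h1b ->
 h01 x0 = y0 -> h0a x0 = y0 -> h01 (x1 - 1) = y1 -> h1b x1 = y1 ->
 hab xa = ya -> h0b (xb - 1) = yb -> hab (xb - 1) = yb -> h1b (xb - 1) = yb ->
 h01 (xa - 1) < ya -> h01 (xb - 1) < yb ->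
 (forall u, xb - 1 <= u < x0 -> h0a u != h0b u) ->
 (forall u, xb - 1 <= u <= x0 -> hab u != h0a u) ->
 (forall u, xb - 1 <= u <= x0 -> h01 u != h1b u) ->
 (forall u, xb - 1 < u <= x1 -> hab u != h1b u) ->
 ~ (exists u1 u2, x1 < u1 < xa /\ xb - 1 < u2 < x0 /\
       hab u1 = h01 (u1 - 1) /\ hab u2 = h01 u2) ->
 forall u, xb - 1 <= u < x0 -> h0a u < h0b u.
Proof.
move=> x0p x01 x1a xab xb1 c01 c0a c0b cab c1b e01 e0a e01' e1b eab e0b eab' e1b'
  ab1 ab2 N3 N4 N5 N6 N7 u /andP[u1 u2].
rewrite ltNge; apply/negP => le.
have lt : h0b u < h0a u.
  by have n := N3 u (introT andP (conj u1 u2)); rewrite lt_neqAle le andbT eq_sym n.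
have H1 : yb < h0a (xb - 1).
  rewrite ltNge; apply/negP => H.
  have H' : h0a (xb - 1) < h0b (xb - 1).
    have n : xb - 1 <= xb - 1 < x0 by apply/andP; split; lra.
    by rewrite lt_neqAle (N3 _ n) /= e0b.
  have K : h0a u < h0b u.
    apply: (keep_sign u1 c0a c0b _ H') => v /andP[v1 v2].
    by apply: N3; apply/andP; split; lra.
  by move: K; rewrite ltNge (ltW lt).
have H2 : hab x0 < y0.
  rewrite -e0a; apply: (keep_sign _ cab c0a N4); first lra.
  by rewrite eab'.
have H3 : y0 < h1b x0.
  rewrite -e01; apply: (keep_sign _ c01 c1b N5); first lra.
  by rewrite e1b'.
have H4 : hab x1 < y1.
  rewrite -e1b; apply: (keep_sign (ltW x01) cab c1b); last lra.
  by move=> v /andP[v1 v2]; apply: N6; rewrite v2 andbT; lra.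
apply: N7.
have cA : continuous (fun u => hab u - h01 (u + - 1)).
  by move=> x; exact: (@continuousB _ _ _ hab _ x (cab x) (@cont_shift h01 (- 1) c01 x)).
have cB : continuous (fun u => h01 u - hab u).
  by move=> x; exact: (@continuousB _ _ _ h01 hab x (c01 x) (cab x)).
have [||u3 [/andP[u31 u32] f3]] := @ivt0s _ x1 xa (ltW x1a) cA.
- by rewrite e01'; lra.
- by rewrite eab; lra.
have [|||u4 [/andP[u41 u42] f4]] := @ivt0s _ (xb - 1) x0 _ cB.
- lra.
- by rewrite eab'; lra.
- by rewrite e01; lra.
exists u3, u4; split; first by apply/andP.
split; first by apply/andP.
split; apply/eqP; rewrite -subr_eq0; apply/eqP; first exact: f3.
by move/eqP: f4; rewrite subr_eq0 eq_sym => /eqP ->; rewrite subrr.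
Qed.

Lemma frac_int (u : R) (k : int) : frac (u + k%:~R) = frac u.
Proof.
rewrite /frac floorDrz ?intrKfloor; last by rewrite intr_int.
rewrite rmorphD /=; lra.
Qed.

Lemma frac_id (x : R) : 0 <= x < 1 -> frac x = x.
Proof.
move=> hx; rewrite /Defs.frac (_ : Num.floor x = 0) ?subr0 //.
by apply: floor_def; rewrite add0r.
Qed.

Lemma frac_m1 (x : R) : frac (x - 1) = frac x.
Proof. by have := frac_int x (-1); rewrite (_ : (-1 : int)%:~R = -1 :> R) // ?rmorphN. Qed.

Lemma frac_p1 (x : R) : frac (x + 1) = frac x.
Proof. by have := frac_int x 1. Qed.

Lemma frac_eq (u x : R) : -1 <= u < 1 -> frac u = x -> u = x \/ u = x - 1.
Proof.
move=> /andP[u1 u2] <-; case: (leP 0 u) => u0.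
  by left; rewrite frac_id // u0.
right; rewrite -frac_p1 frac_id; first lra.
apply/andP; split; lra.
Qed.

Lemma frac_floor (u : R) : frac u = 0 -> u = (Num.floor u)%:~R.
Proof. by rewrite /frac => /eqP; rewrite subr_eq0 => /eqP. Qed.

Lemma graph_inc (X Y : R -> R) (p q : pt) :
  continuous X -> continuous Y ->
  (forall s t, 0 <= s <= 1 -> 0 <= t <= 1 -> s < t -> X s < X t) ->
  (forall s t, 0 <= s <= 1 -> 0 <= t <= 1 -> frac (X s) = frac (X t) -> s = t) ->
  (exists t, 0 < t < 1 /\ frac (X t) = 0) ->
  [set ((frac (X 0), Y 0) : pt); (frac (X 1), Y 1)] = [set p; q] ->
  0 < p.1 -> p.1 < q.1 -> q.1 < 1 ->
  exists h : R -> R, continuous h /\ h p.1 = p.2 /\ h (q.1 - 1) = q.2 /\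
   (forall u, q.1 - 1 <= u <= p.1 ->
      exists t, 0 <= t <= 1 /\ frac (X t) = frac u /\ Y t = h u) /\
   (forall t, 0 < t < 1 ->
      exists u, q.1 - 1 < u < p.1 /\ frac u = frac (X t) /\ Y t = h u).
Proof.
move=> cX cY mono finj [t0 [/andP[t00 t01] ft0]] hset p0 pq q1.
have i01 : 0 <= (0:R) <= 1 by apply/andP; split; lra.
have i11 : 0 <= (1:R) <= 1 by apply/andP; split; lra.
have X01 : X 0 < X 1 by apply: mono; rewrite ?ltr01.
have Xinj : forall s t, 0 <= s <= 1 -> 0 <= t <= 1 -> X s = X t -> s = t.
  by move=> s t hs ht e; apply: finj => //; rewrite e.
have range : X 1 - X 0 < 1.
  rewrite ltNge; apply/negP => H.
  have cf : continuous (fun t => X t - (X 0 + 1)).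
    by move=> x; exact: (@continuousB _ _ _ X (fun _ => X 0 + 1) x (cX x) (cvg_cst _)).
  have [||t /andP[ta tb] ht] := @ivt0 _ 0 1 ler01 cf.
  - lra.
  - lra.
  have : t = 0.
    apply: finj; rewrite ?ta ?tb //.
    by move/eqP: ht; rewrite subr_eq0 => /eqP ->; rewrite frac_p1.
  by move=> e; move: ht; rewrite e; lra.
have ht0 : 0 <= t0 <= 1 by rewrite !ltW.
set k := Num.floor (X t0).
have Xk : X t0 = k%:~R by apply: frac_floor.
have k0 : X 0 < k%:~R by rewrite -Xk; apply: mono.
have k1 : k%:~R < X 1 by rewrite -Xk; apply: mono.
have fX0 : frac (X 0) = X 0 - k%:~R + 1.
  rewrite -(frac_int (X 0) (1 - k)) frac_id; first by rewrite rmorphB /=; lra.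
  by rewrite rmorphB /=; apply/andP; split; lra.
have fX1 : frac (X 1) = X 1 - k%:~R.
  rewrite -(frac_int (X 1) (- k)) frac_id; first by rewrite rmorphN /=; lra.
  by rewrite rmorphN /=; apply/andP; split; lra.
have [ep eq'] : (frac (X 1), Y 1) = p /\ (frac (X 0), Y 0) = q.
  have pin : [set p; q] p by left.
  have qin : [set p; q] q by right.
  rewrite -hset in pin qin.
  case: pin => ep.
    exfalso; case: qin => eq'.
      by move: pq; rewrite ep eq' ltxx.
    by move: pq; rewrite ep eq' /= fX0 fX1; lra.
  case: qin => eq'.
    by split.
  by move: pq; rewrite ep eq' ltxx.
set g := fun u => xget 0 [set t : R | 0 <= t <= 1 /\ X t = u].
have gK : forall t, 0 <= t <= 1 -> g (X t) = t.
  move=> t ht.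
  have [h1 h2] : [set t' : R | 0 <= t' <= 1 /\ X t' = X t] (g (X t)).
    by apply: (@xgetI _ 0 _ t).
  exact: Xinj.
have gc : {within `[X 0, X 1], continuous g}.
  apply: (@segment_can_le_continuous R 0 1 X g ler01).
    exact: continuous_subspaceT.
  by move=> t; rewrite in_itv /= => ht; apply: gK.
have gcc := within_clamp (ltW X01) gc.
set K : R := k%:~R.
exists (fun u => Y (g (clamp (X 0) (X 1) (u + K)))).
have hp : p.1 + K = X 1 by rewrite -ep /= fX1 /K; lra.
have hq : q.1 - 1 + K = X 0 by rewrite -eq' /= fX0 /K; lra.
split.
  apply: (@cont_shift (fun u => Y (g (clamp (X 0) (X 1) u)))) => x.
  exact: (@continuous_comp _ _ _ _ Y x (gcc x) (cY _)).
split.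
  by rewrite hp clamp_id ?lexx ?(ltW X01) // gK // -ep.
split.
  by rewrite hq clamp_id ?lexx ?(ltW X01) // gK // -eq'.
split.
  move=> u hu.
  have hv : X 0 <= u + K <= X 1 by apply/andP; split; lra.
  have cf : continuous (fun t => X t - (u + K)).
    by move=> x; exact: (@continuousB _ _ _ X (fun _ => u + K) x (cX x) (cvg_cst _)).
  have [||t /andP[ta tb] ht] := @ivt0 _ 0 1 ler01 cf.
  - lra.
  - lra.
  have Xt : X t = u + K by lra.
  exists t; split; first by rewrite ta tb.
  split; first by rewrite Xt /K frac_int.
  by rewrite clamp_id // -Xt gK // ta tb.
move=> t /andP[ta tb].
have ht : 0 <= t <= 1 by rewrite !ltW.
have X0t : X 0 < X t by apply: mono; rewrite ?ta.
have Xt1 : X t < X 1 by apply: mono; rewrite ?tb.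
exists (X t - K); split.
  apply/andP; split; lra.
split.
  by rewrite -(frac_int (X t - K) k) /K; congr frac; lra.
rewrite (_ : X t - K + K = X t); last lra.
by rewrite clamp_id ?gK // !ltW.
Qed.

Lemma edge_graph (c : carc) (p q : pt) : jordan_arc c -> endpts c = [set p; q] ->
  xmonotone c -> (exists y, relint c (0, y)) -> 0 < p.1 -> p.1 < q.1 -> q.1 < 1 ->
  exists h : R -> R, continuous h /\ h p.1 = p.2 /\ h (q.1 - 1) = q.2 /\
   (forall u, q.1 - 1 <= u <= p.1 -> pts c (frac u, h u)) /\
   (forall a y, relint c (a, y) -> exists u, q.1 - 1 < u < p.1 /\ frac u = a /\ y = h u).
Proof.
move=> [cX [cY inj]] he hm [y0 [t0 [ht0 e0]]] p0 pq q1.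
have finj : forall s t, 0 <= s <= 1 -> 0 <= t <= 1 ->
    frac (ax c s) = frac (ax c t) -> s = t.
  move=> s t hs ht e; apply: inj => //; apply: hm.
  - by exists s.
  - by exists t.
  - exact: e.
have Xinj : {in `[0, 1]%R &, injective (ax c)}.
  move=> s t hs ht e; move: hs ht; rewrite !in_itv /= => hs ht; apply: finj => //; by rewrite e.
have cXc : continuous (fun t => ax c (clamp 0 1 t)) := within_clamp ler01 cX.
have cYc : continuous (fun t => ay c (clamp 0 1 t)) := within_clamp ler01 cY.
have ctt : forall t : R, 0 <= t <= 1 -> clamp 0 1 t = t by move=> t; exact: clamp_id.
have ft0 : frac (ax c t0) = 0 by move: e0 => [].
have ht0' : 0 <= t0 <= 1 by case/andP: ht0 => a b; rewrite !ltW.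
have := itv_continuous_inj_mono cX Xinj; case => [inc|dec].
  have [|||| h [hc [hp [hq [H1 H2]]]]] :=
     @graph_inc _ _ p q cXc cYc _ _ _ _ p0 pq q1.
  - move=> s t hs ht st; rewrite !ctt //; apply: inc => //; by rewrite in_itv.
  - by move=> s t hs ht; rewrite !ctt //; apply: finj.
  - by exists t0; split => //; rewrite ctt.
  - by rewrite !ctt ?lexx ?ler01 //; exact: he.
  exists h; split=> //; split=> //; split=> //; split.
    move=> u hu; have [t [ht [e1 e2]]] := H1 u hu; exists t; split => //.
    by rewrite /arc_at -e2 -e1 ctt.
  move=> a y [t [ht e]]; have [u [hu [e1 e2]]] := H2 t ht.
  have ht' : 0 <= t <= 1 by case/andP: ht => a' b'; rewrite !ltW.
  exists u; split => //; move: e; rewrite /arc_at => -[<- <-]; split.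
    by rewrite e1 ctt.
  by rewrite -e2 ctt.
have c1 : continuous (fun t : R => 1 - t).
  move=> x; exact: (@continuousB R R _ (fun _ : R => 1) (fun t : R => t) x (cvg_cst _) cvg_id).
have cX' : continuous (fun t : R => ax c (clamp 0 1 (1 - t))).
  by move=> x; exact: (@continuous_comp _ _ _ _ _ x (c1 x) (cXc _)).
have cY' : continuous (fun t : R => ay c (clamp 0 1 (1 - t))).
  by move=> x; exact: (@continuous_comp _ _ _ _ _ x (c1 x) (cYc _)).
have ctt' : forall t : R, 0 <= t <= 1 -> clamp 0 1 (1 - t) = 1 - t.
  by move=> t ht; apply: clamp_id; apply/andP; split; case/andP: ht; lra.
have i1 : forall t : R, 0 <= t <= 1 -> 0 <= 1 - t <= 1.
  by move=> t /andP[a b]; apply/andP; split; lra.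
have [|||| h [hc [hp [hq [H1 H2]]]]] :=
     @graph_inc _ _ p q cX' cY' _ _ _ _ p0 pq q1.
- move=> s t hs ht st; rewrite !ctt' //; apply: dec; rewrite ?in_itv ?i1 //; lra.
- move=> s t hs ht; rewrite !ctt' // => e.
  have := finj _ _ (i1 _ hs) (i1 _ ht) e; lra.
- exists (1 - t0); split; first by case/andP: ht0 => a b; apply/andP; split; lra.
  rewrite ctt' // -ft0; f_equal; f_equal; lra.
- rewrite !ctt' ?subr0 ?subrr; first 1 last.
  + by apply/andP; split; lra.
  + by apply/andP; split; lra.
  by rewrite -he /endpts setUC.
exists h; split=> //; split=> //; split=> //; split.
  move=> u hu; have [t [ht [e1 e2]]] := H1 u hu; exists (1 - t); split; first exact: i1.
  by rewrite /arc_at -e2 -e1 ctt'.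
move=> a y [t [ht e]].
have ht' : 0 <= t <= 1 by case/andP: ht => a' b'; rewrite !ltW.
have ht1 : 0 < 1 - t < 1 by case/andP: ht => a' b'; apply/andP; split; lra.
have [u [hu [e1 e2]]] := H2 _ ht1.
have tt : 1 - (1 - t) = t by lra.
exists u; split => //; move: e; rewrite /arc_at => -[<- <-]; split.
  by rewrite e1 ctt' ?tt // i1.
by rewrite -e2 ctt' ?tt // i1.
Qed.

Lemma fracI (u w : R) : -1 <= u < 1 -> -1 <= w < 1 -> u - w < 1 -> w - u < 1 ->
  frac u = frac w -> u = w.
Proof.
move=> hu hw d1 d2 e.
have [] := frac_eq hu e; have [] := frac_eq hw (erefl (frac w)); lra.
Qed.

Lemma relint_pts (c : @carc R) (P : pt) : relint c P -> pts c P.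
Proof. by case=> t [/andP[a b] e]; exists t; split => //; rewrite !ltW. Qed.

Lemma core_neg (h01 h0a h0b hab h1b : R -> R) (x0 x1 xa xb y0 y1 ya yb : R) :
 0 < x0 -> x0 < x1 -> x1 < xa -> xa < xb -> xb < 1 ->
 continuous h01 -> continuous h0a -> continuous h0b -> continuous hab -> continuous h1b ->
 h01 x0 = y0 -> h0a x0 = y0 -> h01 (x1 - 1) = y1 -> h1b x1 = y1 ->
 hab xa = ya -> h0b (xb - 1) = yb -> hab (xb - 1) = yb -> h1b (xb - 1) = yb ->
 ya < h01 (xa - 1) -> yb < h01 (xb - 1) ->
 (forall u, xb - 1 <= u < x0 -> h0a u != h0b u) ->
 (forall u, xb - 1 <= u <= x0 -> hab u != h0a u) ->
 (forall u, xb - 1 <= u <= x0 -> h01 u != h1b u) ->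
 (forall u, xb - 1 < u <= x1 -> hab u != h1b u) ->
 ~ (exists u1 u2, x1 < u1 < xa /\ xb - 1 < u2 < x0 /\
       hab u1 = h01 (u1 - 1) /\ hab u2 = h01 u2) ->
 forall u, xb - 1 <= u < x0 -> h0b u < h0a u.
Proof.
move=> x0p x01 x1a xab xb1 c01 c0a c0b cab c1b e01 e0a e01' e1b eab e0b eab' e1b'
  ab1 ab2 N3 N4 N5 N6 N7 u hu.
have cN : forall h : R -> R, continuous h -> continuous (fun u => - h u).
  by move=> h hc x; exact: (@continuousN R R _ h x (hc x)).
rewrite -ltrN2.
apply: (@core (fun u => - h01 u) (fun u => - h0a u) (fun u => - h0b u)
   (fun u => - hab u) (fun u => - h1b u) x0 x1 xa xb (- y0) (- y1) (- ya) (- yb))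
   => //; try exact: cN.
- by rewrite e01.
- by rewrite e0a.
- by rewrite e01'.
- by rewrite e1b.
- by rewrite eab.
- by rewrite e0b.
- by rewrite eab'.
- by rewrite e1b'.
- by rewrite ltrN2.
- by rewrite ltrN2.
- by move=> w hw; rewrite eqr_opp N3.
- by move=> w hw; rewrite eqr_opp N4.
- by move=> w hw; rewrite eqr_opp N5.
- by move=> w hw; rewrite eqr_opp N6.
move=> [u1 [u2 [h1 [h2 [e1 e2]]]]]; apply: N7; exists u1, u2; do 2 split => //.
by split; apply: oppr_inj.
Qed.

Section Main.
Variables (n : nat) (v : nat -> @pt R) (E : nat -> nat -> @carc R).
Hypothesis hn : (2 <= n)%N.
Hypothesis hf : flag n v E.
Local Notation x k := (v k).1.
Local Notation y k := (v k).2.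

Lemma xr i : (i < n)%N -> 0 < x i < 1.
Proof. by case: hf => H _; apply: H. Qed.

Lemma xo i j : (i < j < n)%N -> x i < x j.
Proof. by case: hf => _ [H _]; apply: H. Qed.

Lemma EG i j : (i < j < n)%N -> exists h : R -> R,
  continuous h /\ h (x i) = y i /\ h (x j - 1) = y j /\
   (forall u, x j - 1 <= u <= x i -> pts (E i j) (frac u, h u)) /\
   (forall a y, relint (E i j) (a, y) -> exists u, x j - 1 < u < x i /\ frac u = a /\ y = h u).
Proof.
move=> hij; case: hf => hv [ho [he [_ [_ [hm hz]]]]].
have [hj he'] := he i j hij.
have /andP[ij jn] := hij.
have [xi0 _] := andP (xr (ltn_trans ij jn)); have [_ xj1] := andP (xr jn).
exact: edge_graph hj he' (hm _ _ hij) (hz _ _ hij) xi0 (ho _ _ hij) xj1.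
Qed.

Lemma vpts i j : (i < j < n)%N -> pts (E i j) (v i) /\ pts (E i j) (v j).
Proof.
move=> hij; case: hf => _ [_ [he _]]; have [_ he'] := he i j hij.
have H : forall w, [set v i; v j] w -> pts (E i j) w.
  rewrite -he' => w [->|->].
  - by exists 0; split => //; apply/andP; split; lra.
  - by exists 1; split => //; apply/andP; split; lra.
by split; apply: H; [left|right].
Qed.

Lemma simple1 i j k l : (i < j < n)%N -> (k < l < n)%N -> (i, j) <> (k, l) ->
  forall P Q, pts (E i j) P -> pts (E k l) P -> pts (E i j) Q -> pts (E k l) Q -> P = Q.
Proof.
move=> h1 h2 h3; case: hf => _ [_ [_ [_ [hs _]]]].
by have [H _] := hs _ _ _ _ h1 h2 h3; apply: H.
Qed.

Lemma geom a b : (2 <= a)%N -> (a < b < n)%N ->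
 exists h01 h0a h0b hab h1b : R -> R,
  [/\ continuous h01, continuous h0a, continuous h0b, continuous hab & continuous h1b] /\
  [/\ h01 (x 0) = y 0, h0a (x 0) = y 0, h01 (x 1 - 1) = y 1 & h1b (x 1) = y 1] /\
  [/\ hab (x a) = y a, h0b (x b - 1) = y b, hab (x b - 1) = y b & h1b (x b - 1) = y b] /\
  (forall u, x b - 1 <= u < x 0 -> h0a u != h0b u) /\
  (forall u, x b - 1 <= u <= x 0 -> hab u != h0a u) /\
  (forall u, x b - 1 <= u <= x 0 -> h01 u != h1b u) /\
  (forall u, x b - 1 < u <= x 1 -> hab u != h1b u) /\
  ~ (exists u1 u2, x 1 < u1 < x a /\ x b - 1 < u2 < x 0 /\
       hab u1 = h01 (u1 - 1) /\ hab u2 = h01 u2) /\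
  (forall y, relint (E 0 1) (x a, y) -> y = h01 (x a - 1)) /\
  (forall y, relint (E 0 1) (x b, y) -> y = h01 (x b - 1)) /\
  (forall a' y, relint (E 0 a) (a', y) ->
      exists u, x a - 1 < u < x 0 /\ frac u = a' /\ y = h0a u) /\
  (forall a' y, relint (E 0 b) (a', y) ->
      exists u, x b - 1 < u < x 0 /\ frac u = a' /\ y = h0b u).
Proof.
move=> a2 hab; have /andP[ab bn] := hab.
have i01 : (0 < 1 < n)%N by lia.
have i0a : (0 < a < n)%N by lia.
have i0b : (0 < b < n)%N by lia.
have i1b : (1 < b < n)%N by lia.
have [h01 [c01 [e01 [e01' [P01 R01]]]]] := EG i01.
have [h0a [c0a [e0a [e0a' [P0a R0a]]]]] := EG i0a.
have [h0b [c0b [e0b [e0b' [P0b R0b]]]]] := EG i0b.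
have [hab' [cab [eab [eab' [Pab Rab]]]]] := EG hab.
have [h1b [c1b [e1b [e1b' [P1b R1b]]]]] := EG i1b.
have n0 : (0 < n)%N by lia.
have [x00 _] := andP (xr n0).
have [_ xb1] := andP (xr bn).
have x01 := xo i01.
have x1a : x 1 < x a by apply: xo; lia.
have xab := xo hab.
have meet : forall i j k l w P, (i < j < n)%N -> (k < l < n)%N -> (i, j) <> (k, l) ->
    pts (E i j) w -> pts (E k l) w -> pts (E i j) P -> pts (E k l) P -> P.1 = w.1.
  by move=> i j k l w P h1 h2 h3 p1 p2 p3 p4; rewrite (simple1 h1 h2 h3 p3 p4 p1 p2).
have n0ab : (0%N, a) <> (0%N, b) by move=> H; case: H => *; lia.
have nab01 : (a, b) <> (0%N, 1%N) by move=> H; case: H => *; lia.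
have nab0a : (a, b) <> (0%N, a) by move=> H; case: H => *; lia.
have n011b : (0%N, 1%N) <> (1%N, b) by move=> H; case: H => *; lia.
have nab1b : (a, b) <> (1%N, b) by move=> H; case: H => *; lia.
exists h01, h0a, h0b, hab', h1b.
split; first by split.
split; first by split.
split; first by split.
split.
  move=> u /andP[u1 u2]; apply/eqP => e.
  have p1 : pts (E 0 a) (frac u, h0a u) by apply: P0a; apply/andP; split; lra.
  have p2 : pts (E 0 b) (frac u, h0a u) by rewrite e; apply: P0b; apply/andP; split; lra.
  have := meet _ _ _ _ _ _ i0a i0b n0ab (vpts i0a).1 (vpts i0b).1 p1 p2 => /= fu.
  have hu' : -1 <= u < 1 by apply/andP; split; lra.
  by have [] := frac_eq hu' fu; lra.
split.
  move=> u /andP[u1 u2]; apply/eqP => e.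
  have p1 : pts (E a b) (frac u, hab' u) by apply: Pab; apply/andP; split; lra.
  have p2 : pts (E 0 a) (frac u, hab' u) by rewrite e; apply: P0a; apply/andP; split; lra.
  have := meet _ _ _ _ _ _ hab i0a nab0a (vpts hab).1 (vpts i0a).2 p1 p2 => /= fu.
  have hu' : -1 <= u < 1 by apply/andP; split; lra.
  by have [] := frac_eq hu' fu; lra.
split.
  move=> u /andP[u1 u2]; apply/eqP => e.
  have p1 : pts (E 0 1) (frac u, h01 u) by apply: P01; apply/andP; split; lra.
  have p2 : pts (E 1 b) (frac u, h01 u) by rewrite e; apply: P1b; apply/andP; split; lra.
  have := meet _ _ _ _ _ _ i01 i1b n011b (vpts i01).2 (vpts i1b).1 p1 p2 => /= fu.
  have hu' : -1 <= u < 1 by apply/andP; split; lra.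
  by have [] := frac_eq hu' fu; lra.
split.
  move=> u /andP[u1 u2]; apply/eqP => e.
  have p1 : pts (E a b) (frac u, hab' u) by apply: Pab; apply/andP; split; lra.
  have p2 : pts (E 1 b) (frac u, hab' u) by rewrite e; apply: P1b; apply/andP; split; lra.
  have := meet _ _ _ _ _ _ hab i1b nab1b (vpts hab).2 (vpts i1b).2 p1 p2 => /= fu.
  have hu' : -1 <= u < 1 by apply/andP; split; lra.
  by have [] := frac_eq hu' fu; lra.
split.
  move=> [u1 [u2 [/andP[u11 u12] [/andP[u21 u22] [e1 e2]]]]].
  have p1 : pts (E a b) (frac u1, hab' u1) by apply: Pab; apply/andP; split; lra.
  have p2 : pts (E 0 1) (frac u1, hab' u1).
    by rewrite e1 -frac_m1; apply: P01; apply/andP; split; lra.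
  have p3 : pts (E a b) (frac u2, hab' u2) by apply: Pab; apply/andP; split; lra.
  have p4 : pts (E 0 1) (frac u2, hab' u2) by rewrite e2; apply: P01; apply/andP; split; lra.
  have := meet _ _ _ _ _ _ hab i01 nab01 p3 p4 p1 p2 => /= fu.
  rewrite (frac_id (_ : 0 <= u1 < 1)) in fu; last by apply/andP; split; lra.
  have hu' : -1 <= u2 < 1 by apply/andP; split; lra.
  by have [] := frac_eq hu' (esym fu); lra.
have relv : forall k, (1 < k < n)%N -> forall y, relint (E 0 1) (x k, y) -> y = h01 (x k - 1).
  move=> k hk y r; have [u [/andP[u1 u2] [fu ->]]] := R01 _ _ r.
  have x1k : x 1 < x k by apply: xo.
  have hu' : -1 <= u < 1 by apply/andP; split; lra.
  by have [e|e] := frac_eq hu' fu; [lra | rewrite e].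
split; first by apply: relv; lia.
split; first by apply: relv; lia.
split; [exact: R0a | exact: R0b].
Qed.

Lemma ge2 a y0 : (a < n)%N -> relint (E 0 1) (x a, y0) -> (2 <= a)%N.
Proof.
move=> an r.
have i01 : (0 < 1 < n)%N by lia.
have [h01 [_ [_ [_ [_ R01]]]]] := EG i01.
have [u [/andP[u1 u2] [fu _]]] := R01 _ _ r.
have x01 := xo i01.
have hu' : -1 <= u < 1.
  have [_ xb1] := andP (xr i01).
  have n0 : (0 < n)%N by lia.
  have [x00 _] := andP (xr n0).
  by apply/andP; split; lra.
clear r; case: a an fu => [|[|a]] an fu //.
- by have [] := frac_eq hu' fu; lra.
- by have [] := frac_eq hu' fu; lra.
Qed.

Lemma nocross a b : (0 < a)%N -> (a < b < n)%N ->
  ~ cross (E 0 a) (E 0 b) /\ ~ cross (E 0 b) (E 0 a).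
Proof.
move=> a0 hab.
have i0a : (0 < a < n)%N by lia.
have i0b : (0 < b < n)%N by lia.
have n0ab : (0%N, a) <> (0%N, b) by move=> H; case: H => *; lia.
have [h0a [_ [_ [_ [_ R0a]]]]] := EG i0a.
have n0 : (0 < n)%N by lia.
have [x00 _] := andP (xr n0).
have x0a := xo i0a.
have an : (a < n)%N by lia.
have [_ xa1] := andP (xr an).
have key : forall P, relint (E 0 a) P -> relint (E 0 b) P -> False.
  move=> [p1 p2] r1 r2.
  have e := simple1 i0a i0b n0ab (relint_pts r1) (relint_pts r2) (vpts i0a).1 (vpts i0b).1.
  have [u [/andP[u1 u2] [fu _]]] := R0a _ _ r1.
  have ep : p1 = x 0 by rewrite -e.
  rewrite ep in fu.
  have hu' : -1 <= u < 1 by apply/andP; split; lra.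
  by have [] := frac_eq hu' fu; lra.
by split => -[P [r1 [r2 _]]]; [exact: key P r1 r2 | exact: key P r2 r1].
Qed.

Lemma main_res :
  (forall i1 i2, (i1 < i2 < n)%N ->
     above (v i1) (E 0 1)%N -> above (v i2) (E 0 1)%N ->
     prec (E 0 i1)%N (E 0 i2)%N) /\
  (forall i1 i2, (i1 < i2 < n)%N ->
     below (v i1) (E 0 1)%N -> below (v i2) (E 0 1)%N ->
     prec (E 0 i2)%N (E 0 i1)%N).
Proof.
have n0 : (0 < n)%N by lia.
have [x00 _] := andP (xr n0).
have i01 : (0 < 1 < n)%N by lia.
have x01 := xo i01.
have hz : forall i j, (i < j < n)%N -> exists y, relint (E i j) (0, y).
  by case: hf => _ [_ [_ [_ [_ [_ H]]]]].
split.
- move=> a b hab [ya' [ra hya]] [yb' [rb hyb]].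
  have /andP[ab bn] := hab.
  have a2 := ge2 (ltn_trans ab bn) ra.
  have i0a : (0 < a < n)%N by lia.
  have i0b : (0 < b < n)%N by lia.
  have x1a : x 1 < x a by apply: xo; lia.
  have xab := xo hab.
  have [_ xb1] := andP (xr bn).
  have [h01 [h0a [h0b [hab' [h1b [[c01 c0a c0b cab c1b] [[e01 e0a e01' e1b]
    [[eab e0b eab' e1b'] [N3 [N4 [N5 [N6 [N7 [Ra [Rb [R0a R0b]]]]]]]]]]]]]]]] := geom a2 hab.
  have ha' : h01 (x a - 1) < y a by rewrite -(Ra _ ra).
  have hb' : h01 (x b - 1) < y b by rewrite -(Rb _ rb).
  have ord := core x00 x01 x1a xab xb1 c01 c0a c0b cab c1b e01 e0a e01' e1b eab e0b eab' e1b'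
    ha' hb' N3 N4 N5 N6 N7.
  have wb : weakly_below (E 0 a) (E 0 b).
    move=> a' y z r1 r2.
    have [u [/andP[u1 u2] [fu ->]]] := R0a _ _ r1.
    have [w [/andP[w1 w2] [fw ->]]] := R0b _ _ r2.
    have uw : u = w.
      apply: fracI; first (by apply/andP; split; lra); first (by apply/andP; split; lra).
      - lra.
      - lra.
      by rewrite fu fw.
    by rewrite uw; apply/ltW/ord; rewrite uw in u1 *; apply/andP; split; lra.
  split => //; split; first exact: (nocross (ltnW a2) hab).1.
  split; last by left.
  have [y1 r1] := hz _ _ i0a; have [y2 r2] := hz _ _ i0b.
  by exists 0, y1, y2.
- move=> a b hab [ya' [ra hya]] [yb' [rb hyb]].
  have /andP[ab bn] := hab.
  have a2 := ge2 (ltn_trans ab bn) ra.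
  have i0a : (0 < a < n)%N by lia.
  have i0b : (0 < b < n)%N by lia.
  have x1a : x 1 < x a by apply: xo; lia.
  have xab := xo hab.
  have [_ xb1] := andP (xr bn).
  have [h01 [h0a [h0b [hab' [h1b [[c01 c0a c0b cab c1b] [[e01 e0a e01' e1b]
    [[eab e0b eab' e1b'] [N3 [N4 [N5 [N6 [N7 [Ra [Rb [R0a R0b]]]]]]]]]]]]]]]] := geom a2 hab.
  have ha' : y a < h01 (x a - 1) by rewrite -(Ra _ ra).
  have hb' : y b < h01 (x b - 1) by rewrite -(Rb _ rb).
  have ord := core_neg x00 x01 x1a xab xb1 c01 c0a c0b cab c1b e01 e0a e01' e1b eab e0b eab' e1b'
    ha' hb' N3 N4 N5 N6 N7.
  have wb : weakly_below (E 0 b) (E 0 a).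
    move=> a' y z r2 r1.
    have [u [/andP[u1 u2] [fu ->]]] := R0a _ _ r1.
    have [w [/andP[w1 w2] [fw ->]]] := R0b _ _ r2.
    have uw : u = w.
      apply: fracI; first (by apply/andP; split; lra); first (by apply/andP; split; lra).
      - lra.
      - lra.
      by rewrite fu fw.
    by rewrite uw; apply/ltW/ord; rewrite uw in u1 *; apply/andP; split; lra.
  split => //; split; first exact: (nocross (ltnW a2) hab).2.
  split; last by left.
  have [y1 r1] := hz _ _ i0a; have [y2 r2] := hz _ _ i0b.
  by exists 0, y2, y1.
Qed.

End Main.

End S.

Theorem lemma13 (R : realType) (n : nat) (v : nat -> @pt R)
  (E : nat -> nat -> @carc R) :
  (2 <= n)%N -> flag n v E ->
  (forall i1 i2, (i1 < i2 < n)%N ->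
     above (v i1) (E 0 1)%N -> above (v i2) (E 0 1)%N ->
     prec (E 0 i1)%N (E 0 i2)%N) /\
  (forall i1 i2, (i1 < i2 < n)%N ->
     below (v i1) (E 0 1)%N -> below (v i2) (E 0 1)%N ->
     prec (E 0 i2)%N (E 0 i1)%N).
Proof. by move=> hn hf; apply: main_res. Qed.
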